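(* Let $V=\{1,\dots,n\}$ and let $W=(w_1,\dots,w_m)\in V^m$ be a sequence such that each element of $V$ appears in $W$ at least once and any three consecutive elements of $W$ are distinct. Then the set of 3-cycles $\mathcal{C}=\{(w_{i-1}\ w_i\ w_{i+1}) : 1<i<m\}$ can generate any even permutation of $V$ in $O(n^3)$ shifts; that is, there is an absolute constant $K$ (independent of $m$ and $W$) such that every even permutation of $V$ is a product of at most $Kn^3$ factors, each being an element of $\mathcal{C}$ or the inverse of one.
   Context: Permutations are written in cycle notation; $(x\ y\ z)$ denotes the 3-cycle sending $x\mapsto y\mapsto z\mapsto x$. *)

(* Defs.v *)
From mathcomp Require Import all_boot all_fingroup.
Set Implicit Arguments. Unset Strict Implicit. Unset Printing Implicit Defensive.

(* V = {1,...,n} is represented by 'I_n.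
   In mathcomp, (s * t) x = t (s x).  The 3-cycle (x y z), sending
   x |-> y |-> z |-> x, is tperm x y * tperm x z for distinct x, y, z:
   x -> y -> y ; y -> x -> z ; z -> z -> x. *)
Definition cycle3 (T : finType) (x y z : T) : {perm T} :=
  (tperm x y * tperm x z)%g.

Definition covers (n : nat) (W : seq 'I_n) : Prop :=
  forall v : 'I_n, v \in W.

(* Any three consecutive entries of W are pairwise distinct
   (the default x0 is irrelevant since indices are in range). *)
Definition three_consec_distinct (n : nat) (W : seq 'I_n) : Prop :=
  forall (x0 : 'I_n) (i : nat), i.+2 < size W ->
    uniq [:: nth x0 W i; nth x0 W i.+1; nth x0 W i.+2].

(* c belongs to C = {(w_{i-1} w_i w_{i+1}) : 1 < i < m} or is the inverse of one
   (0-based: triples at positions i, i+1, i+2 with i+2 < m). *)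
Definition shift_or_inv (n : nat) (W : seq 'I_n) (c : {perm 'I_n}) : Prop :=
  exists (x0 : 'I_n) (i : nat), i.+2 < size W /\
    let s := cycle3 (nth x0 W i) (nth x0 W i.+1) (nth x0 W i.+2) in
    (c = s \/ c = s^-1)%g.

(* Main.v *)
Require Import Defs.
From mathcomp Require Import all_boot all_fingroup.
From mathcomp Require Import zify.

Set Implicit Arguments. Unset Strict Implicit. Unset Printing Implicit Defensive.

Section Aux.
Variable n : nat.
Implicit Types (W : seq 'I_n) (g h c : {perm 'I_n}).

Lemma card_cons' (x : 'I_n) (s : seq 'I_n) : #|x :: s| = (x \notin s) + #|s|.
Proof.
rewrite -cardU1; apply: eq_card => v; by rewrite !inE.
Qed.

Lemma card_rcons' (x : 'I_n) (s : seq 'I_n) : #|rcons s x| = (x \notin s) + #|s|.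
Proof.
rewrite -card_cons'; apply: eq_card => v; by rewrite mem_rcons.
Qed.

Definition word (P : {perm 'I_n} -> Prop) (L : nat) g :=
  exists s : seq {perm 'I_n},
    [/\ size s <= L, (forall c, c \in s -> P c) & g = (\prod_(c <- s) c)%g].

Lemma word1 P L : word P L 1%g.
Proof. by exists [::]; split => //; rewrite big_nil. Qed.

Lemma word_mon P L L' g : L <= L' -> word P L g -> word P L' g.
Proof. move=> le [s [h1 h2 h3]]; exists s; split => //; exact: leq_trans le. Qed.

Lemma word_sub (P Q : {perm 'I_n} -> Prop) L g :
  (forall c, P c -> Q c) -> word P L g -> word Q L g.
Proof. move=> PQ [s [h1 h2 h3]]; exists s; split => // c /h2; exact: PQ. Qed.

Lemma word_mul P L1 L2 g h : word P L1 g -> word P L2 h -> word P (L1 + L2) (g * h)%g.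
Proof.
move=> [s [h1 h2 h3]] [t [k1 k2 k3]]; exists (s ++ t); split.
- by rewrite size_cat leq_add.
- by move=> c; rewrite mem_cat => /orP [/h2|/k2].
- by rewrite big_cat /= h3 k3.
Qed.

Lemma word_gen (P : {perm 'I_n} -> Prop) c : P c -> word P 1 c.
Proof.
move=> Pc; exists [:: c]; split => //; first by move=> d; rewrite inE => /eqP ->.
by rewrite big_cons big_nil mulg1.
Qed.

Lemma word_inv (P : {perm 'I_n} -> Prop) L g :
  (forall c, P c -> P c^-1%g) -> word P L g -> word P L g^-1%g.
Proof.
move=> Pinv [s [h1 h2 ->]] {g}; elim: s L h1 h2 => [|c s IH] L h1 h2.
  by rewrite big_nil invg1; exact: word1.
rewrite big_cons invMg.
have -> : L = (L - 1) + 1 by move: h1 => /= ; lia.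
apply: word_mul; last by apply: word_gen; apply: Pinv; apply: h2; rewrite inE eqxx.
apply: IH; first by move: h1 => /=; lia.
by move=> d ds; apply: h2; rewrite inE ds orbT.
Qed.

Lemma soi_inv W c : shift_or_inv W c -> shift_or_inv W c^-1%g.
Proof.
move=> [x0 [i [hi hc]]]; exists x0, i; split => //.
by case: hc => ->; [right | left; rewrite invgK].
Qed.

Lemma soi_cons u W c : shift_or_inv W c -> shift_or_inv (u :: W) c.
Proof. move=> [x0 [i [hi hc]]]; exists x0, i.+1; split => //. Qed.

Lemma soi_rcons x W c : shift_or_inv W c -> shift_or_inv (rcons W x) c.
Proof.
move=> [x0 [i [hi hc]]]; exists x0, i; split; first by rewrite size_rcons; lia.
rewrite !nth_rcons; have -> : i < size W by lia.
have -> : i.+1 < size W by lia.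
by have -> : i.+2 < size W by lia.
Qed.

Lemma cycle3_fix (x y z v : 'I_n) : v != x -> v != y -> v != z -> cycle3 x y z v = v.
Proof.
move=> vx vy vz; rewrite /cycle3 permM.
have xv : x != v by rewrite eq_sym.
have yv : y != v by rewrite eq_sym.
have zv : z != v by rewrite eq_sym.
by rewrite (tpermD xv yv) (tpermD xv zv).
Qed.

Lemma soi_support W c v : shift_or_inv W c -> v \notin W -> c v = v.
Proof.
move=> [x0 [i [hi hc]]] vW.
have mem k : k < size W -> v != nth x0 W k.
  move=> hk; apply/eqP => e; move: vW; rewrite e mem_nth //.
have F : cycle3 (nth x0 W i) (nth x0 W i.+1) (nth x0 W i.+2) v = v.
  apply: cycle3_fix; apply: mem; lia.
case: hc => ->; first exact: F.
by rewrite -{1}F permK.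
Qed.

Lemma word_support W L g v : word (shift_or_inv W) L g -> v \notin W -> g v = v.
Proof.
move=> [s [_ h2 ->]] vW; elim: s h2 => [|c s IH] h2; first by rewrite big_nil perm1.
rewrite big_cons permM (soi_support (h2 c _) vW) ?inE ?eqxx //.
by apply: IH => d ds; apply: h2; rewrite inE ds orbT.
Qed.

Lemma tcd_cons u W : three_consec_distinct (u :: W) -> three_consec_distinct W.
Proof. move=> H x0 i hi; exact: (H x0 i.+1). Qed.

Lemma tcd_rcons x W : three_consec_distinct (rcons W x) -> three_consec_distinct W.
Proof.
move=> H x0 i hi; have := H x0 i; rewrite size_rcons !nth_rcons.
have -> : i < size W by lia.
have -> : i.+1 < size W by lia.
have -> : i.+2 < size W by lia.
by apply; lia.
Qed.

Lemma cycle3_vals (x y z : 'I_n) : uniq [:: x; y; z] ->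
  [/\ cycle3 x y z x = y, cycle3 x y z y = z & cycle3 x y z z = x].
Proof.
rewrite /= !inE negb_or => /andP [/andP [xy xz] /andP [yz _]].
have yx : y != x by rewrite eq_sym.
have zx : z != x by rewrite eq_sym.
have zy : z != y by rewrite eq_sym.
rewrite /cycle3 !permM tpermL tpermR tpermL (tpermD xz yz).
by rewrite (tpermD xy zy) tpermR.
Qed.

Lemma walk W : three_consec_distinct W -> 2 <= size W ->
  forall (z0 y : 'I_n), y \in W -> exists h,
    word (shift_or_inv W) #|W| h /\
    (h y = nth z0 W (size W - 2) \/ h y = nth z0 W (size W - 1)).
Proof.
elim: W => [|u W IH] //= tcd hs z0 y yW.
have tcdW := tcd_cons tcd.
case: (ltnP (size W) 2) => hW.
  case: W hW hs tcd tcdW IH yW => [|v [|w W]] //= _ _ _ _ _.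
  rewrite !inE => /orP [/eqP ->|/eqP ->]; exists 1%g; rewrite perm1; split.
  - exact: word1.
  - by left.
  - exact: word1.
  - by right.
have e2 : (size W).+1 - 2 = (size W - 2).+1 by lia.
have e1 : (size W).+1 - 1 = (size W - 1).+1 by lia.
rewrite e2 e1 /=.
have lift h : word (shift_or_inv W) #|W| h -> word (shift_or_inv (u :: W)) #|u :: W| h.
  move=> wh; apply: (word_mon (L := #|W|)); first by rewrite card_cons'; lia.
  apply: word_sub wh => c; exact: soi_cons.
case yW' : (y \in W).
  have [h [wh hy]] := IH tcdW hW z0 y yW'.
  by exists h; split => //; apply: lift.
move: yW; rewrite inE yW' orbF => /eqP Hy; subst y.
set w1 := nth z0 W 0; set w2 := nth z0 W 1.
have w1W : w1 \in W by apply: mem_nth; exact: ltnW.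
have [h [wh hy]] := IH tcdW hW z0 w1 w1W.
have un : uniq [:: u; w1; w2] by have := tcd z0 0; apply; rewrite /= ltnS.
have [c1 _ _] := cycle3_vals un.
exists (cycle3 u w1 w2 * h)%g; split; last by rewrite permM c1.
rewrite card_cons' yW' /=.
apply: word_mul.
  apply: word_gen; exists z0, 0; split; [by rewrite /= ltnS | by left].
by apply: word_sub wh => c; exact: soi_cons.
Qed.


Lemma soi_even W c : three_consec_distinct W -> shift_or_inv W c -> ~~ odd_perm c.
Proof.
move=> tcd [x0 [i [hi hc]]].
have := tcd x0 i hi; rewrite /= !inE negb_or => /andP [/andP [xy xz] _].
have E : odd_perm (cycle3 (nth x0 W i) (nth x0 W i.+1) (nth x0 W i.+2)) = false.
  by rewrite /cycle3 odd_permM !odd_tperm xy xz.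
by case: hc => ->; rewrite ?odd_permV E.
Qed.

Lemma word_even W L g : three_consec_distinct W -> word (shift_or_inv W) L g -> ~~ odd_perm g.
Proof.
move=> tcd [s [_ h2 ->]]; elim: s h2 => [|c s IH] h2; first by rewrite big_nil odd_perm1.
rewrite big_cons odd_permM.
have /negbTE -> := soi_even tcd (h2 c (mem_head _ _)).
by rewrite /= IH // => d ds; apply: h2; rewrite inE ds orbT.
Qed.

Lemma cardW W : #|W| <= n.
Proof. by have := max_card (mem W); rewrite card_ord. Qed.

Lemma main W : three_consec_distinct W -> forall p : {perm 'I_n}, ~~ odd_perm p ->
  (forall v, p v != v -> v \in W) -> word (shift_or_inv W) (#|W| * (n + 2)) p.
Proof.
elim/last_ind: W => [|W x IH] tcd p op sup.
  have -> : p = 1%g.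
    apply/permP => v; rewrite perm1; apply/eqP; apply/negPn/negP => /sup.
    by rewrite in_nil.
  exact: word1.
have tcdW := tcd_rcons tcd.
have liftr L h : word (shift_or_inv W) L h -> word (shift_or_inv (rcons W x)) L h.
  apply: word_sub => c; exact: soi_rcons.
case xW : (x \in W).
  rewrite card_rcons' xW /=; apply: liftr; apply: IH => // v /sup.
  by rewrite mem_rcons inE => /orP [/eqP ->|].
rewrite card_rcons' xW /=.
case: (eqVneq (p x) x) => px.
  apply: (word_mon (L := #|W| * (n + 2))); first by rewrite mulSn leq_addl.
  apply: liftr; apply: IH => // v pv; move: (sup v pv); rewrite mem_rcons inE.
  case/orP => // /eqP e; by move: pv; rewrite e px eqxx.
set y := p x.
have py : p y != y.
  apply/negP => /eqP e; move: px; rewrite -/y; apply/negP; rewrite negbK.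
  by apply/eqP; apply: (@perm_inj _ p); rewrite e.
have yW : y \in W.
  move: (sup y py); rewrite mem_rcons inE => /orP [/eqP e|//].
  by move: px; rewrite -/y e eqxx.
case: (ltnP (size W) 2) => hW.
  exfalso; case: W IH tcd tcdW liftr xW yW hW sup => [|z [|w W]] //= IH tcd tcdW liftr xW yW _ sup.
  move: yW xW; rewrite !inE => /eqP yz /negbT xz.
  have pz : p = tperm x z.
    apply/permP => v; case: (eqVneq v x) => [->|vx]; first by rewrite tpermL.
    case: (eqVneq v z) => [->|vz].
      rewrite tpermR; have pz : p z != z by rewrite -yz.
      have ppz : p (p z) != p z by apply: contra pz => /eqP /perm_inj ->.
      move: (sup _ ppz); rewrite !inE => /orP [/eqP e|/eqP //].
      by move: pz; rewrite e eqxx.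
    rewrite tpermD ?(eq_sym x) ?(eq_sym z) //.
    apply/eqP; apply/negPn/negP => /sup; rewrite !inE.
    by rewrite (negbTE vz) (negbTE vx).
  by move: op; rewrite pz odd_tperm xz.
have [h0 [wh0 hy]] := walk tcdW hW x yW.
set a := nth x W (size W - 2) in hy.
set b := nth x W (size W - 1) in hy.
have Ea : nth x (rcons W x) (size W - 2) = a by rewrite nth_rcons ifT //; lia.
have Eb : nth x (rcons W x) (size W - 2).+1 = b.
  rewrite nth_rcons ifT; last by lia.
  by rewrite /b; congr nth; lia.
have Ex : nth x (rcons W x) (size W - 2).+2 = x.
  rewrite nth_rcons ifF; last by lia.
  by rewrite ifT //; apply/eqP; lia.
have hi : (size W - 2).+2 < size (rcons W x) by rewrite size_rcons; lia.
have un : uniq [:: a; b; x] by have := tcd x (size W - 2) hi; rewrite Ea Eb Ex.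
have [ca cb cx] := cycle3_vals un.
have wc : word (shift_or_inv (rcons W x)) 1 (cycle3 a b x).
  apply: word_gen; exists x, (size W - 2); split => //; left.
  by rewrite Ea Eb Ex.
have [h [wh hyx]] : exists h, word (shift_or_inv (rcons W x)) (#|W| + 2) h /\ h y = x.
  case: hy => hy.
    exists (h0 * cycle3 a b x * cycle3 a b x)%g; split.
      by rewrite -[2]/(1+1) addnA; apply: word_mul; [apply: word_mul; [apply: liftr|]|].
    by rewrite (permM (h0 * cycle3 a b x)) (permM h0) hy ca cb.
  exists (h0 * cycle3 a b x)%g; split.
    apply: (word_mon (L := #|W| + 1)); first by rewrite leq_add2l.
    by apply: word_mul; [apply: liftr|].
  by rewrite (permM h0) hy cb.
have qx : (p * h)%g x = x by rewrite permM.
have oq : ~~ odd_perm (p * h)%g.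
  by rewrite odd_permM (negbTE op) /= (word_even tcd wh).
have wq : word (shift_or_inv W) (#|W| * (n + 2)) (p * h)%g.
  apply: IH => // v qv.
  have vin : v \in rcons W x.
    apply/negPn/negP => vn; move: qv; rewrite permM.
    have -> : p v = v by apply/eqP; apply/negPn/negP => /sup; rewrite (negbTE vn).
    by rewrite (word_support wh vn) eqxx.
  move: vin; rewrite mem_rcons inE => /orP [/eqP e|//].
  by move: qv; rewrite e qx eqxx.
have -> : p = (p * h * h^-1)%g by rewrite mulgK.
rewrite mulSn addnC; apply: word_mul; first exact: liftr.
apply: (word_mon (L := #|W| + 2)); first by rewrite leq_add2r cardW.
apply: word_inv => //; exact: soi_inv.
Qed.

End Aux.

Theorem lemma4 :
  exists K : nat, forall (n : nat) (W : seq 'I_n),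
    covers W -> three_consec_distinct W ->
    forall p : {perm 'I_n}, ~~ odd_perm p ->
      exists s : seq {perm 'I_n},
        [/\ size s <= K * n ^ 3,
            (forall c, c \in s -> shift_or_inv W c)
          & p = (\prod_(c <- s) c)%g].
Proof.
exists 3 => n W cov tcd p op.
have [s [h1 h2 h3]] := main tcd op (fun v _ => cov v).
exists s; split => //; apply: (leq_trans h1).
have cW := cardW W.
case: n W cov tcd p op s h1 h2 h3 cW => [|n] W cov tcd p op s h1 h2 h3 cW.
  by rewrite leqn0 in cW; rewrite (eqP cW).
apply: (leq_trans (leq_mul cW (leqnn _))).
rewrite expnS expnS expn1. nia.
Qed.
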